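(* Let $\mathcal{M}\subseteq\mathbb{S}^n$. If $\mathcal{S}(\mathcal{M})$ is rank-one generated, then for all $B\in\mathbb{S}^n$, $$\mathrm{conv}\left(\{X\in\mathbb{S}^n:\ \langle M,X\rangle\ge0\ \forall M\in\mathcal{M},\ \langle B,X\rangle=1,\ X\succeq0,\ \mathrm{rank}(X)\le2\}\right)=\{X\in\mathbb{S}^n:\ \langle M,X\rangle\ge0\ \forall M\in\mathcal{M},\ \langle B,X\rangle=1,\ X\succeq0\}.$$ In particular, when $\mathcal{S}(\mathcal{M})$ is rank-one generated and $\mathcal{M}=\{M_1,\dots,M_m\}$, for any $M_0\in\mathbb{S}^n$ there exists a sequence of rank-two feasible solutions approaching the optimal value of $\inf\{\langle M_0,X\rangle: X\succeq0,\ \langle M_i,X\rangle\ge0\ \forall i\in\{1,\dots,m\},\ X_{1,1}=1\}$.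
   Context: $\mathbb{S}^n$ denotes real symmetric $n\times n$ matrices with $\langle A,B\rangle=\mathrm{tr}(AB)$, $\mathbb{S}^n_+$ the PSD cone, $X\succeq0$ means $X$ is PSD. For $\mathcal{M}\subseteq\mathbb{S}^n$, $\mathcal{S}(\mathcal{M})=\{X\in\mathbb{S}^n_+:\langle M,X\rangle\ge0\ \forall M\in\mathcal{M}\}$. A closed convex cone $\mathcal{S}\subseteq\mathbb{S}^n_+$ is rank-one generated (ROG) if $\mathcal{S}=\mathrm{conv}(\mathcal{S}\cap\{xx^\top:x\in\mathbb{R}^n\})$. *)

(* Defs.v *)
From HB Require Import structures.
From mathcomp Require Import all_boot all_order all_algebra.
From mathcomp Require Import all_classical all_reals all_analysis.
Set Implicit Arguments. Unset Strict Implicit. Unset Printing Implicit Defensive.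
Import Order.TTheory GRing.Theory Num.Theory.
Local Open Scope classical_set_scope.
Local Open Scope ring_scope.

Section Defs.
Variable R : realType.

Definition symmx n (X : 'M[R]_n) : Prop := X^T = X.

Definition psdmx n (X : 'M[R]_n) : Prop :=
  symmx X /\ forall v : 'cV[R]_n, 0 <= (v^T *m X *m v) 0 0.

Definition inner n (A B : 'M[R]_n) : R := \tr (A *m B).

Definition SM n (Ms : set 'M[R]_n) : set 'M[R]_n :=
  [set X | psdmx X /\ forall M, Ms M -> 0 <= inner M X].

Definition mconv n (S : set 'M[R]_n) : set 'M[R]_n :=
  [set X | exists (k : nat) (l : 'I_k -> R) (Y : 'I_k -> 'M[R]_n),
      (forall i, S (Y i)) /\ (forall i, 0 <= l i) /\
      \sum_(i < k) l i = 1 /\ X = \sum_(i < k) l i *: Y i].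

Definition rank_one_set n : set 'M[R]_n := [set X | exists x : 'cV[R]_n, X = x *m x^T].

Definition ROG n (S : set 'M[R]_n) : Prop := S = mconv (S `&` @rank_one_set n).

End Defs.

(* Main.v *)
Require Import Defs.
From HB Require Import structures.
From mathcomp Require Import all_boot all_order all_algebra.
From mathcomp Require Import all_classical all_reals all_analysis.
From mathcomp Require Import ring lra zify.
Import Order.TTheory GRing.Theory Num.Theory.
Local Open Scope classical_set_scope.
Local Open Scope ring_scope.

Section H.
Variable R : realType.
Variable n : nat.
Implicit Types (X Y B M : 'M[R]_n).

Lemma innerD B X Y : inner B (X + Y) = inner B X + inner B Y.
Proof. by rewrite /inner mulmxDr mxtraceD. Qed.
Lemma innerZ B c X : inner B (c *: X) = c * inner B X.
Proof. by rewrite /inner -scalemxAr mxtraceZ. Qed.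
Lemma inner0 B : inner B 0 = 0.
Proof. by rewrite /inner mulmx0 mxtrace0. Qed.
Lemma inner_sum B (I : Type) (r : seq I) (P : pred I) (F : I -> 'M[R]_n) :
  inner B (\sum_(i <- r | P i) F i) = \sum_(i <- r | P i) inner B (F i).
Proof. exact: (big_morph _ (innerD B) (inner0 B)). Qed.

Lemma split_lshift m k (j : 'I_m) : fintype.split (lshift k j) = inl j.
Proof. exact: (unsplitK (inl j)). Qed.
Lemma split_rshift m k (j : 'I_k) : fintype.split (rshift m j) = inr j.
Proof. exact: (unsplitK (inr j)). Qed.

Lemma mconv_sub (S : set 'M[R]_n) X : S X -> mconv S X.
Proof.
move=> SX; exists 1%N, (fun=> 1), (fun=> X); split => //; split => //.
by rewrite big_ord1 scale1r big_ord1.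
Qed.

Lemma mconv_mono (S T : set 'M[R]_n) : S `<=` T -> mconv S `<=` mconv T.
Proof.
move=> ST X [k [l [Y [HY [Hl [H1 ->]]]]]].
by exists k, l, Y; split => // i; apply: ST.
Qed.

Lemma mconv_convex (S : set 'M[R]_n) X Y (t : R) : 0 <= t <= 1 ->
  mconv S X -> mconv S Y -> mconv S (t *: X + (1 - t) *: Y).
Proof.
move=> /andP[t0 t1] [k1 [l1 [Y1 [HY1 [Hl1 [H11 ->]]]]]]
  [k2 [l2 [Y2 [HY2 [Hl2 [H12 ->]]]]]].
exists (k1 + k2)%N,
  (fun i => match fintype.split i with inl j => t * l1 j | inr j => (1 - t) * l2 j end),
  (fun i => match fintype.split i with inl j => Y1 j | inr j => Y2 j end).
split; [|split; [|split]].
- by move=> i; case: fintype.split.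
- move=> i; case: fintype.split => j; apply: mulr_ge0 => //; by rewrite subr_ge0.
- rewrite big_split_ord /=.
  rewrite (eq_bigr (fun i => t * l1 i)); last by move=> i _; rewrite (split_lshift k1 k2 i).
  rewrite [X in _ + X](eq_bigr (fun i => (1 - t) * l2 i)); last by move=> i _; rewrite (split_rshift k1 k2 i).
  by rewrite -!mulr_sumr H11 H12 !mulr1 addrC subrK.
- rewrite big_split_ord /=.
  rewrite [in RHS](eq_bigr (fun i => (t * l1 i) *: Y1 i)); last by move=> i _; rewrite (split_lshift k1 k2 i).
  rewrite [X in _ = _ + X](eq_bigr (fun i => ((1 - t) * l2 i) *: Y2 i)); last by move=> i _; rewrite (split_rshift k1 k2 i).
  by rewrite !scaler_sumr; congr (_ + _); apply: eq_bigr => i _; rewrite scalerA.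
Qed.


Variable Ms : set 'M[R]_n.
Variable B : 'M[R]_n.

Definition A := SM Ms `&` @rank_one_set R n.
Definition T := [set X | exists a b, A a /\ A b /\ inner B (a + b) = 1 /\ X = a + b].

Lemma A0 : A 0.
Proof.
split; last by exists 0; rewrite mul0mx.
split; last by move=> M _; rewrite inner0.
split; first by rewrite /symmx trmx0.
by move=> v; rewrite mulmx0 mul0mx mxE.
Qed.

Lemma AZ c a : 0 <= c -> A a -> A (c *: a).
Proof.
move=> c0 [[[Hs Hq] HM] [x xE]]; split; last first.
  exists (Num.sqrt c *: x).
  by rewrite xE linearZ /= -scalemxAl -scalemxAr scalerA -expr2 sqr_sqrtr.
split; last by move=> M HMM; rewrite innerZ mulr_ge0 // HM.
split; first by rewrite /symmx linearZ /= Hs.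
by move=> v; rewrite -scalemxAr -scalemxAl mxE mulr_ge0 // Hq.
Qed.

Lemma red x y rest (t : R) : 0 < t < 1 ->
  mconv T (t^-1 *: x + rest) -> mconv T ((1 - t)^-1 *: y + rest) ->
  mconv T (x + y + rest).
Proof.
move=> /andP[t0 t1] H1 H2.
have -> : x + y + rest = t *: (t^-1 *: x + rest) + (1 - t) *: ((1 - t)^-1 *: y + rest).
  have tn : t != 0 by rewrite gt_eqF.
  have tn1 : 1 - t != 0 by rewrite subr_eq0 gt_eqF.
  rewrite !scalerDr !scalerA (divff tn) (divff tn1) !scale1r.
  by rewrite addrACA -scalerDl [t + _]addrC subrK scale1r.
by apply: (@mconv_convex T _ _ t _ H1 H2); rewrite !ltW.
Qed.


Lemma TA a b : A a -> A b -> inner B (a + b) = 1 -> T (a + b).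
Proof. by move=> Aa Ab Hf; exists a, b. Qed.

Lemma base (P N Z : seq 'M[R]_n) :
  (size P <= 1)%N -> (size N <= 1)%N -> (size Z <= 1)%N ->
  (forall a, a \in P -> A a /\ 0 < inner B a) ->
  (forall a, a \in N -> A a /\ inner B a < 0) ->
  (forall a, a \in Z -> A a /\ inner B a = 0) ->
  inner B (\sum_(a <- P) a + \sum_(a <- N) a + \sum_(a <- Z) a) = 1 ->
  mconv T (\sum_(a <- P) a + \sum_(a <- N) a + \sum_(a <- Z) a).
Proof.
case: P => [|x [|? ?]] //; case: N => [|y [|? ?]] //; case: Z => [|z [|? ?]] //
  _ _ _ HP HN HZ; rewrite ?big_cons !big_nil ?addr0 ?add0r => Hf.
- by move: Hf; rewrite inner0 => /eqP; rewrite eq_sym oner_eq0.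
- have [_ bz] := HZ z (mem_head _ _); lra.
- have [_ bz] := HN y (mem_head _ _); lra.
- have [_ bz] := HZ z (mem_head _ _); have [_ b] := HN y (mem_head _ _).
  rewrite innerD in Hf; lra.
- have [Ax _] := HP x (mem_head _ _).
  by apply: mconv_sub; rewrite -[x]addr0; apply: TA => //; [exact: A0 | rewrite addr0].
- have [Ax _] := HP x (mem_head _ _); have [Az _] := HZ z (mem_head _ _).
  exact/mconv_sub/TA.
- have [Ax _] := HP x (mem_head _ _); have [Ay _] := HN y (mem_head _ _).
  exact/mconv_sub/TA.
- have [Ax bx] := HP x (mem_head _ _); have [Ay b_y] := HN y (mem_head _ _).
  have [Az bz] := HZ z (mem_head _ _).
  rewrite !innerD in Hf.
  set ib := (inner B x)^-1.
  have ibx : ib * inner B x = 1 by rewrite mulVf // gt_eqF.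
  have ib0 : 0 < ib by rewrite invr_gt0.
  have ib1 : ib <= 2 by nra.
  have -> : x + y + z = 2^-1 *: (ib *: x + 2 *: z) + (1 - 2^-1) *: ((2 - ib) *: x + 2 *: y).
    rewrite !scalerDr !scalerA addrACA -scalerDl.
    have -> : 2^-1 * ib + (1 - 2^-1) * (2 - ib) = 1 :> R by field.
    have -> : 2^-1 * 2 = 1 :> R by field.
    have -> : (1 - 2^-1) * 2 = 1 :> R by field.
    by rewrite !scale1r [z + y]addrC addrA.
  apply: mconv_convex; first by apply/andP; split; lra.
  + apply/mconv_sub/TA; try apply: AZ => //; try lra.
    by rewrite innerD !innerZ bz ibx; lra.
  + apply/mconv_sub/TA; try apply: AZ => //; try lra.
    by rewrite innerD !innerZ mulrBl ibx; lra.
Qed.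


Lemma fe1 (a b : R) : a != 0 -> a + b != 0 -> (a / (a + b))^-1 * a = a + b.
Proof. by move=> ? ?; field; apply/andP. Qed.
Lemma fe2 (a b : R) : b != 0 -> a + b != 0 -> (1 - a / (a + b))^-1 * b = a + b.
Proof. move=> ? ?; have -> : 1 - a / (a + b) = b / (a + b) by field. by rewrite invf_div divfK. Qed.

Lemma tpos (a b : R) : 0 < a -> 0 < b -> 0 < a / (a + b) < 1.
Proof.
move=> ha hb; have hab : 0 < a + b by lra.
apply/andP; split; first by rewrite divr_gt0.
by rewrite ltr_pdivrMr // mul1r; lra.
Qed.
Lemma tneg (a b : R) : a < 0 -> b < 0 -> 0 < a / (a + b) < 1.
Proof.
move=> ha hb; have -> : a / (a + b) = (- a) / ((- a) + (- b)) by rewrite -opprD invrN mulrNN.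
apply: tpos; lra.
Qed.

Lemma step2 x y rest (t : R) : 0 < t < 1 ->
  t^-1 * inner B x = inner B x + inner B y ->
  (1 - t)^-1 * inner B y = inner B x + inner B y ->
  inner B (x + y + rest) = 1 ->
  (forall w c, 0 < c -> (w = c *: x \/ w = c *: y) -> inner B (w + rest) = 1 ->
     mconv T (w + rest)) ->
  mconv T (x + y + rest).
Proof.
move=> /andP[t0 t1] ex ey Hf K.
have t0' : 0 < t^-1 by rewrite invr_gt0.
have t1' : 0 < (1 - t)^-1 by rewrite invr_gt0 subr_gt0.
rewrite !innerD in Hf.
apply: (@red x y rest t); first by rewrite t0 t1.
- by apply: (K _ _ t0'); [left | rewrite innerD innerZ ex; lra].
- by apply: (K _ _ t1'); [right | rewrite innerD innerZ ey; lra].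
Qed.

Lemma mainind k : forall (P N Z : seq 'M[R]_n),
  (size P + size N + size Z <= k)%N ->
  (forall a, a \in P -> A a /\ 0 < inner B a) ->
  (forall a, a \in N -> A a /\ inner B a < 0) ->
  (forall a, a \in Z -> A a /\ inner B a = 0) ->
  inner B (\sum_(a <- P) a + \sum_(a <- N) a + \sum_(a <- Z) a) = 1 ->
  mconv T (\sum_(a <- P) a + \sum_(a <- N) a + \sum_(a <- Z) a).
Proof.
elim: k => [|k IH] P N Z Hs HP HN HZ Hf.
  by apply: base => //; lia.
have [sP|sP] := leqP (size P) 1; last first.
  case: P Hs HP Hf sP => [|x [|y P']] //= Hs HP Hf _.
  rewrite !big_cons in Hf *.
  have [Ax bx] := HP x (mem_head _ _).
  have [Ay b_y] : A y /\ 0 < inner B y by apply: HP; rewrite !inE eqxx orbT.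
  set rest := \sum_(a <- P') a + \sum_(a <- N) a + \sum_(a <- Z) a.
  have E : forall w, w + rest = \sum_(a <- w :: P') a + \sum_(a <- N) a + \sum_(a <- Z) a.
    by move=> w; rewrite big_cons /rest !addrA.
  have -> : x + (y + \sum_(a <- P') a) + \sum_(a <- N) a + \sum_(a <- Z) a = x + y + rest.
    by rewrite /rest !addrA.
  have bxy : inner B x + inner B y != 0 by rewrite gt_eqF // addr_gt0.
  apply: (@step2 x y rest (inner B x / (inner B x + inner B y))).
  - exact: tpos.
  - by rewrite fe1 // gt_eqF.
  - by rewrite fe2 // gt_eqF.
  - by move: Hf; rewrite /rest !addrA.
  move=> w c c0 wE; rewrite E => Hw; apply: IH => //.
    idtac.
  move=> a; rewrite inE => /orP[/eqP->|aP]; last first.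
    by apply: HP; rewrite !inE aP !orbT.
  case: wE => ->; rewrite innerZ; split; try apply: AZ; rewrite ?ltW ?mulr_gt0 //.
have [sN|sN] := leqP (size N) 1; last first.
  case: N Hs HN Hf sN => [|x [|y N']] //= Hs HN Hf _.
  rewrite !big_cons in Hf *.
  have [Ax bx] := HN x (mem_head _ _).
  have [Ay b_y] : A y /\ inner B y < 0 by apply: HN; rewrite !inE eqxx orbT.
  set rest := \sum_(a <- P) a + \sum_(a <- N') a + \sum_(a <- Z) a.
  have E0 : forall w, w + rest = \sum_(a <- P) a + (w + \sum_(a <- N') a) + \sum_(a <- Z) a.
    by move=> w; rewrite /rest !addrA [w + _]addrC.
  have -> : \sum_(a <- P) a + (x + (y + \sum_(a <- N') a)) + \sum_(a <- Z) a = x + y + rest.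
    by rewrite E0 !addrA.
  have bxy : inner B x + inner B y != 0 by rewrite lt_eqF //; lra.
  apply: (@step2 x y rest (inner B x / (inner B x + inner B y))).
  - exact: tneg.
  - by rewrite fe1 // lt_eqF.
  - by rewrite fe2 // lt_eqF.
  - by move: Hf; rewrite E0 !addrA.
  have E : forall w, w + rest = \sum_(a <- P) a + \sum_(a <- w :: N') a + \sum_(a <- Z) a.
    by move=> w; rewrite big_cons E0.
  move=> w c c0 wE; rewrite E => Hw; apply: IH => //; first by move: Hs => /=; lia.
  move=> a; rewrite inE => /orP[/eqP->|aN]; last first.
    by apply: HN; rewrite !inE aN !orbT.
  case: wE => ->; rewrite innerZ; split; try apply: AZ; rewrite ?ltW ?pmulr_rlt0 //.
have [sZ|sZ] := leqP (size Z) 1; last first.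
  case: Z Hs HZ Hf sZ => [|x [|y Z']] //= Hs HZ Hf _.
  rewrite !big_cons in Hf *.
  have [Ax bx] := HZ x (mem_head _ _).
  have [Ay b_y] : A y /\ inner B y = 0 by apply: HZ; rewrite !inE eqxx orbT.
  set rest := \sum_(a <- P) a + \sum_(a <- N) a + \sum_(a <- Z') a.
  have E0 : forall w, w + rest = \sum_(a <- P) a + \sum_(a <- N) a + (w + \sum_(a <- Z') a).
    by move=> w; rewrite /rest addrCA.
  have -> : \sum_(a <- P) a + \sum_(a <- N) a + (x + (y + \sum_(a <- Z') a)) = x + y + rest.
    by rewrite E0 !addrA.
  apply: (@step2 x y rest 2^-1).
  - by apply/andP; split; lra.
  - by rewrite bx b_y; lra.
  - by rewrite bx b_y; lra.
  - by move: Hf; rewrite E0 !addrA.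
  have E : forall w, w + rest = \sum_(a <- P) a + \sum_(a <- N) a + \sum_(a <- w :: Z') a.
    by move=> w; rewrite big_cons E0.
  move=> w c c0 wE; rewrite E => Hw; apply: IH => //; first by move: Hs => /=; lia.
  move=> a; rewrite inE => /orP[/eqP->|aZ]; last first.
    by apply: HZ; rewrite !inE aZ !orbT.
  case: wE => ->; rewrite innerZ; split; try apply: AZ; rewrite ?ltW ?bx ?b_y ?mulr0 //.
by apply: base.
Qed.


Definition tgt2 := [set X : 'M[R]_n | (forall M, Ms M -> 0 <= inner M X) /\
  inner B X = 1 /\ psdmx X /\ (\rank X <= 2)%N].

Lemma rank_A a : A a -> (\rank a <= 1)%N.
Proof.
move=> [_ [x ->]]; apply: leq_trans (mxrankM_maxl _ _) _; exact: rank_leq_col.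
Qed.

Lemma T_tgt : T `<=` tgt2.
Proof.
move=> _ [a [b [Aa [Ab [Hf ->]]]]].
have Ra := @rank_A a Aa; have Rb := @rank_A b Ab.
move: Aa Ab => [[[Hsa Hqa] HMa] _] [[[Hsb Hqb] HMb] _].
split; first by move=> M HM; rewrite innerD addr_ge0 ?HMa ?HMb.
split => //; split; last by apply: leq_trans (mxrank_add _ _) _; rewrite -[2%N]/(1 + 1)%N leq_add.
split; first by rewrite /symmx linearD /= Hsa Hsb.
by move=> v; rewrite mulmxDr mulmxDl mxE addr_ge0.
Qed.

Lemma conv_tgt : mconv tgt2 `<=`
  [set X | (forall M, Ms M -> 0 <= inner M X) /\ inner B X = 1 /\ psdmx X].
Proof.
move=> _ [k [l [Y [HY [Hl [H1 ->]]]]]].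
split.
  move=> M HM; rewrite inner_sum sumr_ge0 // => i _; rewrite innerZ mulr_ge0 //.
  by case: (HY i) => + _; apply.
split.
  rewrite inner_sum -H1; apply: eq_bigr => i _; rewrite innerZ.
  by case: (HY i) => _ [-> _]; rewrite mulr1.
split.
  rewrite /symmx linear_sum; apply: eq_bigr => i _ /=.
  by rewrite linearZ /=; case: (HY i) => _ [_ [[-> _] _]].
move=> v; rewrite mulmx_sumr mulmx_suml summxE sumr_ge0 // => i _.
rewrite -scalemxAr -scalemxAl mxE mulr_ge0 //.
by case: (HY i) => _ [_ [[_ ->] _]].
Qed.

Lemma feas_conv (Hrog : ROG (SM Ms)) X :
  (forall M, Ms M -> 0 <= inner M X) -> inner B X = 1 -> psdmx X -> mconv T X.
Proof.
move=> HM Hf Hp.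
have : SM Ms X by [].
rewrite Hrog => -[k [l [Y [HY [Hl [H1 XE]]]]]].
pose g i := inner B (l i *: Y i).
have AY i : A (l i *: Y i) by apply: AZ => //; apply: HY.
pose P := [seq l i *: Y i | i <- index_enum 'I_k & 0 < g i].
pose N := [seq l i *: Y i | i <- index_enum 'I_k & g i < 0].
pose Z := [seq l i *: Y i | i <- index_enum 'I_k & g i == 0].
have E : X = \sum_(a <- P) a + \sum_(a <- N) a + \sum_(a <- Z) a.
  rewrite XE !big_map !big_filter (bigID (fun i => 0 < g i)) /= -addrA; congr (_ + _).
  rewrite (bigID (fun i => g i < 0)) /=; congr (_ + _); apply: eq_bigl => i.
    by case: (ltgtP (g i) 0).
  by case: (ltgtP (g i) 0).
rewrite E; apply: (@mainind (size P + size N + size Z)) => //.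
- by move=> a /mapP[i]; rewrite mem_filter => /andP[gi _] ->.
- by move=> a /mapP[i]; rewrite mem_filter => /andP[gi _] ->.
- by move=> a /mapP[i]; rewrite mem_filter => /andP[/eqP gi _] ->.
- by rewrite -E.
Qed.

End H.

Lemma inner_delta (R : realType) (n : nat) (i : 'I_n) (X : 'M[R]_n) :
  inner (delta_mx i i) X = X i i.
Proof.
rewrite /inner /mxtrace (bigD1 i) //= big1 ?addr0.
  rewrite mxE (bigD1 i) //= big1 ?addr0; first by rewrite mxE !eqxx mul1r.
  by move=> j ji; rewrite mxE (negbTE ji) andbF mul0r.
by move=> j ji; rewrite mxE big1 // => k _; rewrite mxE (negbTE ji) andFb mul0r.
Qed.

Lemma mconv_ne (R : realType) (n : nat) (S : set 'M[R]_n) X :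
  mconv S X -> exists Y, S Y.
Proof.
case=> [[|k] [l [Y [HY [_ [H1 _]]]]]]; last by exists (Y ord0).
by move: H1; rewrite big_ord0 => /eqP; rewrite eq_sym oner_eq0.
Qed.

Theorem lemma5p6 (R : realType) (n : nat) (Ms : set 'M[R]_n)
  (HMs : forall M, Ms M -> symmx M)
  (Hrog : ROG (SM Ms)) :
  (forall B : 'M[R]_n, symmx B ->
     mconv [set X | (forall M, Ms M -> 0 <= inner M X) /\ inner B X = 1 /\
                   psdmx X /\ (\rank X <= 2)%N]
     = [set X | (forall M, Ms M -> 0 <= inner M X) /\ inner B X = 1 /\ psdmx X])
  /\
  (forall (m : nat) (Mi : 'I_m -> 'M[R]_n), Ms = range Mi ->
   forall (M0 : 'M[R]_n), symmx M0 -> forall (h : (0 < n)%N),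
   let feas := [set X : 'M[R]_n | psdmx X /\ (forall i, 0 <= inner (Mi i) X) /\
                                 X (Ordinal h) (Ordinal h) = 1] in
   feas !=set0 ->
   exists u : nat -> 'M[R]_n,
     (forall k, feas (u k) /\ (\rank (u k) <= 2)%N) /\
     ((fun k => (inner M0 (u k))%:E) @ \oo -->
        ereal_inf [set (inner M0 X)%:E | X in feas])).
Proof.
have P1 : forall B : 'M[R]_n,
     mconv [set X | (forall M, Ms M -> 0 <= inner M X) /\ inner B X = 1 /\
                   psdmx X /\ (\rank X <= 2)%N]
     = [set X | (forall M, Ms M -> 0 <= inner M X) /\ inner B X = 1 /\ psdmx X].
  move=> B; apply/seteqP; split => X HX.
    exact: (@conv_tgt R n Ms B X HX).
  case: HX => HM [Hf Hp].
  apply: (@mconv_mono R n _ _ (@T_tgt R n Ms B)).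
  exact: feas_conv.
split; first by move=> B _; exact: P1.
move=> m Mi HMi M0 _ h feas [X0 HX0].
set i0 := Ordinal h.
pose F2 := [set X | feas X /\ (\rank X <= 2)%N].
have convF : forall X, feas X -> mconv F2 X.
  move=> X [Hp [HM Hx]].
  have : [set X | (forall M, Ms M -> 0 <= inner M X) /\ inner (delta_mx i0 i0) X = 1
     /\ psdmx X] X.
    split; first by rewrite HMi => M [i _ <-].
    by rewrite inner_delta.
  rewrite -P1; apply: mconv_mono => Y [HMY [HfY [HpY HrY]]].
  split => //; split => //; split; last by rewrite -inner_delta.
  by move=> i; apply: HMY; rewrite HMi; exists i.
pose S := [set (inner M0 X)%:E | X in feas].
pose S2 := [set (inner M0 X)%:E | X in F2].
have eqinf : ereal_inf S = ereal_inf S2.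
  apply/eqP; rewrite eq_le; apply/andP; split.
    by apply: le_ereal_inf => _ [X [HX _] <-]; exists X.
  apply: le_ereal_inf_tmp => _ [X HX <-].
  have [k [l [Y [HY [Hl [H1 XE]]]]]] := convF X HX.
  have lb : forall i, (ereal_inf S2 <= (inner M0 (Y i))%:E)%E.
    by move=> i; apply: ereal_inf_lbound; exists (Y i).
  case E2 : (ereal_inf S2) => [r||]; last by rewrite leNye.
    rewrite lee_fin XE inner_sum.
    have -> : r = \sum_(i < k) l i * r by rewrite -mulr_suml H1 mul1r.
    apply: ler_sum => i _; rewrite innerZ ler_wpM2l //.
    by have := lb i; rewrite E2 lee_fin.
  exfalso; case: k l Y HY Hl H1 XE lb => [|k] l Y HY Hl H1 XE lb.
    by move: H1; rewrite big_ord0 => /eqP; rewrite eq_sym oner_eq0.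
  by have := lb ord0; rewrite E2.
have S2ne : S2 != set0.
  apply/set0P; have [Y HY] := @mconv_ne _ _ _ _ (convF X0 HX0).
  by exists (inner M0 Y)%:E, Y.
have [ue Hue Hlim] := ereal_inf_seq S2ne.
have : forall k, exists X, F2 X /\ (inner M0 X)%:E = ue k.
  by move=> k; have [X HX <-] := Hue k; exists X.
move=> /choice[u Hu].
exists u; split; first by move=> k; case: (Hu k).
rewrite eqinf; apply: cvg_trans Hlim.
have -> : (fun k => (inner M0 (u k))%:E) = ue by apply: funext => k; case: (Hu k).
exact: cvg_id.
Qed.
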